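(* Let $\boldsymbol{m}\in\mathbb{N}^2$ and $f\in\mathcal{L}(\mathrm{I}^{(\boldsymbol{m})})$, and let $P_f=\sum_{\boldsymbol{\gamma}\in\Gamma_\square}c_{\boldsymbol{\gamma}}(f)X_{\boldsymbol{\gamma}}$ be the unique function in $\Pi_\square$ with $P_f(r_{i_1},\theta_{i_2})=f(\boldsymbol{i})$ for all $\boldsymbol{i}\in\mathrm{I}^{(\boldsymbol{m})}$. Then $c_{\boldsymbol{\gamma}}(f)=\langle f,\chi_{\boldsymbol{\gamma}}\rangle_w/\|\chi_{\boldsymbol{\gamma}}\|_w^2$ for all $\boldsymbol{\gamma}\in\Gamma_\square$, and \[\frac1\pi\int_0^{2\pi}\!\!\int_0^1P_f(r,\theta)\,r\,dr\,d\theta=\sum_{k=0}^{\lfloor m_1/2\rfloor}\frac{c_{(4k,0)}(f)}{1-4k^2}.\] In particular, for every $P\in\Pi_\square$, taking $f(\boldsymbol{i})=P(r_{i_1},\theta_{i_2})$, the right-hand side equals $\frac1\pi\int_0^{2\pi}\int_0^1P(r,\theta)\,r\,dr\,d\theta$.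
   Context: $\mathrm{I}^{(\boldsymbol{m})}=\{(i_1,i_2)\in\mathbb{Z}^2:\ 0\le i_1\le m_1,\ -2m_2<i_2\le 2m_2,\ i_2\le0\text{ if }i_1=m_1,\ i_1+i_2\text{ even}\}$; $\mathcal{L}(\mathrm{I}^{(\boldsymbol{m})})$ is the space of all functions $\mathrm{I}^{(\boldsymbol{m})}\to\mathbb{C}$; $r_{i_1}=\cos\!\big(\frac{i_1\pi}{2m_1}\big)$, $\theta_{i_2}=\frac{i_2\pi}{2m_2}$. Weights $w_{\boldsymbol{i}}=\frac{1}{4m_1m_2}$ if $i_1=0$, $w_{\boldsymbol{i}}=\frac{2}{4m_1m_2}$ if $0<i_1\le m_1$; $\langle f,h\rangle_w=\sum_{\boldsymbol{i}}w_{\boldsymbol{i}}f(\boldsymbol{i})\overline{h(\boldsymbol{i})}$. $\chi_{\boldsymbol{\gamma}}(\boldsymbol{i})=\cos\!\big(\frac{\gamma_1i_1\pi}{2m_1}\big)e^{\mathrm{i}\gamma_2i_2\pi/(2m_2)}$. $X_{\boldsymbol{\gamma}}(r,\theta)=T_{\gamma_1}(r)e^{\mathrm{i}\gamma_2\theta}$ with $T_n(r)=\cos(n\arccos r)$. $\Gamma_\square=\{\boldsymbol{\gamma}\in\mathbb{Z}^2: 0\le\gamma_1\le2m_1,\ -m_2<\gamma_2\le m_2,\ \gamma_1+\gamma_2\text{ even}\}$ and $\Pi_\square=\mathrm{span}\{X_{\boldsymbol{\gamma}}:\boldsymbol{\gamma}\in\Gamma_\square\}$. *)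

(* Defs.v *)
From Stdlib Require Import Reals Lra Lia ZArith List.
Open Scope R_scope.

Definition Cx : Type := (R * R)%type.
Definition Cre (z : Cx) : R := fst z.
Definition Cim (z : Cx) : R := snd z.
Definition RtoC (x : R) : Cx := (x, 0).
Definition C0 : Cx := (0, 0).
Definition Cadd (z w : Cx) : Cx := (fst z + fst w, snd z + snd w).
Definition Cmul (z w : Cx) : Cx :=
  (fst z * fst w - snd z * snd w, fst z * snd w + snd z * fst w).
Definition Cconj (z : Cx) : Cx := (fst z, - snd z).
Definition CdivR (z : Cx) (x : R) : Cx := (fst z / x, snd z / x).
Definition Cexpi (t : R) : Cx := (cos t, sin t).

Definition Csum {A : Type} (l : list A) (F : A -> Cx) : Cx :=
  fold_right (fun a acc => Cadd (F a) acc) C0 l.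

Definition Zrange (a : Z) (n : nat) : list Z :=
  map (fun k => (a + Z.of_nat k)%Z) (seq 0 n).

Definition inI (m1 m2 : nat) (i : Z * Z) : bool :=
  let (i1, i2) := i in
  ((0 <=? i1)%Z && (i1 <=? Z.of_nat m1)%Z &&
   (- 2 * Z.of_nat m2 <? i2)%Z && (i2 <=? 2 * Z.of_nat m2)%Z &&
   (if (i1 =? Z.of_nat m1)%Z then (i2 <=? 0)%Z else true) &&
   Z.even (i1 + i2))%bool.

Definition pairs (la lb : list Z) : list (Z * Z) :=
  flat_map (fun a => map (fun b => (a, b)) lb) la.

Definition Iset (m1 m2 : nat) : list (Z * Z) :=
  filter (inI m1 m2)
    (pairs (Zrange 0 (S m1)) (Zrange (- 2 * Z.of_nat m2 + 1) (4 * m2))).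

Definition inGamma (m1 m2 : nat) (g : Z * Z) : bool :=
  let (g1, g2) := g in
  ((0 <=? g1)%Z && (g1 <=? 2 * Z.of_nat m1)%Z &&
   (- Z.of_nat m2 <? g2)%Z && (g2 <=? Z.of_nat m2)%Z &&
   Z.even (g1 + g2))%bool.

Definition Gammaset (m1 m2 : nat) : list (Z * Z) :=
  filter (inGamma m1 m2)
    (pairs (Zrange 0 (S (2 * m1))) (Zrange (- Z.of_nat m2 + 1) (2 * m2))).

Definition r_node (m1 : nat) (i1 : Z) : R := cos (IZR i1 * PI / (2 * INR m1)).
Definition theta_node (m2 : nat) (i2 : Z) : R := IZR i2 * PI / (2 * INR m2).

Definition weight (m1 m2 : nat) (i : Z * Z) : R :=
  if (fst i =? 0)%Z then 1 / (4 * INR m1 * INR m2)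
  else 2 / (4 * INR m1 * INR m2).

(* <f,h>_w = sum_i w_i f(i) conj(h(i)) ; functions on I^(m) are represented
   as functions on Z*Z, only their values on I^(m) matter *)
Definition inner_w (m1 m2 : nat) (f h : Z * Z -> Cx) : Cx :=
  Csum (Iset m1 m2)
    (fun i => Cmul (RtoC (weight m1 m2 i)) (Cmul (f i) (Cconj (h i)))).

Definition chi (m1 m2 : nat) (g : Z * Z) (i : Z * Z) : Cx :=
  Cmul (RtoC (cos (IZR (fst g) * IZR (fst i) * PI / (2 * INR m1))))
       (Cexpi (IZR (snd g) * IZR (snd i) * PI / (2 * INR m2))).

Definition normsq_w (m1 m2 : nat) (h : Z * Z -> Cx) : R :=
  Cre (inner_w m1 m2 h h).

Definition Tcheb (n : Z) (r : R) : R := cos (IZR n * acos r).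

Definition Xfun (g : Z * Z) (r theta : R) : Cx :=
  Cmul (RtoC (Tcheb (fst g) r)) (Cexpi (IZR (snd g) * theta)).

Definition Pfun (m1 m2 : nat) (c : Z * Z -> Cx) (r theta : R) : Cx :=
  Csum (Gammaset m1 m2) (fun g => Cmul (c g) (Xfun g r theta)).

Definition interpolates (m1 m2 : nat) (c : Z * Z -> Cx) (f : Z * Z -> Cx) : Prop :=
  forall i, In i (Iset m1 m2) ->
    Pfun m1 m2 c (r_node m1 (fst i)) (theta_node m2 (snd i)) = f i.

Definition coef (m1 m2 : nat) (f : Z * Z -> Cx) (g : Z * Z) : Cx :=
  CdivR (inner_w m1 m2 f (chi m1 m2 g)) (normsq_w m1 m2 (chi m1 m2 g)).

Definition has_RInt (h : R -> R) (a b v : R) : Prop :=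
  exists pr : Riemann_integrable h a b, RiemannInt pr = v.

Definition has_iter_int (F : R -> R -> R) (v : R) : Prop :=
  exists G : R -> R,
    (forall theta, 0 <= theta <= 2 * PI -> has_RInt (fun r => F r theta) 0 1 (G theta))
    /\ has_RInt G 0 (2 * PI) v.

Definition disk_mean (P : R -> R -> Cx) (z : Cx) : Prop :=
  exists vre vim : R,
    has_iter_int (fun r theta => Cre (P r theta) * r) vre /\
    has_iter_int (fun r theta => Cim (P r theta) * r) vim /\
    vre / PI = Cre z /\ vim / PI = Cim z.

Definition cubature (m1 : nat) (c : Z * Z -> Cx) : Cx :=
  Csum (seq 0 (S (Nat.div m1 2)))
    (fun k => CdivR (c (4 * Z.of_nat k, 0)%Z) (1 - 4 * INR k ^ 2)).

(* Main.v *)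
Require Import Defs.
From Stdlib Require Import Reals ZArith List Lra Lia Bool.
From Coquelicot Require Coquelicot.
Open Scope R_scope.

Lemma cos_Zper x k : cos (x + 2 * IZR k * PI) = cos x.
Proof.
  destruct (Z_le_gt_dec 0 k).
  - replace k with (Z.of_nat (Z.to_nat k)) by lia.
    rewrite <- INR_IZR_INZ. apply cos_period.
  - replace x with ((x + 2 * IZR k * PI) + 2 * INR (Z.to_nat (- k)) * PI) at 2.
    + now rewrite cos_period.
    + rewrite INR_IZR_INZ. rewrite Z2Nat.id by lia. rewrite opp_IZR. ring.
Qed.

Lemma sin_Zper x k : sin (x + 2 * IZR k * PI) = sin x.
Proof.
  destruct (Z_le_gt_dec 0 k).
  - replace k with (Z.of_nat (Z.to_nat k)) by lia.
    rewrite <- INR_IZR_INZ. apply sin_period.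
  - replace x with ((x + 2 * IZR k * PI) + 2 * INR (Z.to_nat (- k)) * PI) at 2.
    + now rewrite sin_period.
    + rewrite INR_IZR_INZ. rewrite Z2Nat.id by lia. rewrite opp_IZR. ring.
Qed.

Lemma cos_Zpi z : cos (IZR z * PI) = if Z.even z then 1 else -1.
Proof.
  destruct (Z.Even_or_Odd z) as [[q Hq]|[q Hq]]; subst.
  - rewrite Z.even_even. replace (IZR (2 * q) * PI) with (0 + 2 * IZR q * PI)
      by (rewrite mult_IZR; ring). rewrite cos_Zper. apply cos_0.
  - rewrite Z.even_odd. replace (IZR (2 * q + 1) * PI) with (PI + 2 * IZR q * PI)
      by (rewrite plus_IZR, mult_IZR; ring). rewrite cos_Zper. apply cos_PI.
Qed.

Lemma sin_Zpi z : sin (IZR z * PI) = 0.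
Proof.
  destruct (Z.Even_or_Odd z) as [[q Hq]|[q Hq]]; subst.
  - replace (IZR (2 * q) * PI) with (0 + 2 * IZR q * PI)
      by (rewrite mult_IZR; ring). rewrite sin_Zper. apply sin_0.
  - replace (IZR (2 * q + 1) * PI) with (PI + 2 * IZR q * PI)
      by (rewrite plus_IZR, mult_IZR; ring). rewrite sin_Zper. apply sin_PI.
Qed.

Lemma even_ind z : (if Z.even z then 1 else 0) = (1 + cos (IZR z * PI)) / 2.
Proof. rewrite cos_Zpi. destruct (Z.even z); field. Qed.

Lemma cos_odd_half z : Z.even z = false -> cos (IZR z * PI / 2) = 0.
Proof.
  intro H. destruct (Z.Even_or_Odd z) as [[q Hq]|[q Hq]]; subst.
  - rewrite Z.even_even in H; discriminate.
  - replace (IZR (2 * q + 1) * PI / 2) with (PI / 2 + IZR q * PI)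
      by (rewrite plus_IZR, mult_IZR; field).
    rewrite cos_plus, cos_PI2, sin_PI2, sin_Zpi. ring.
Qed.

Definition Rsum {A : Type} (l : list A) (F : A -> R) : R :=
  fold_right (fun a acc => F a + acc) 0 l.

Lemma Csum_split {A} (l : list A) F :
  Csum l F = (Rsum l (fun a => fst (F a)), Rsum l (fun a => snd (F a))).
Proof.
  induction l; simpl; auto. unfold Csum in *; simpl. rewrite IHl. reflexivity.
Qed.

Lemma Rsum_app {A} (l1 l2 : list A) F : Rsum (l1 ++ l2) F = Rsum l1 F + Rsum l2 F.
Proof. induction l1; simpl; [ring|rewrite IHl1; ring]. Qed.

Lemma Rsum_plus {A} (l : list A) F G :
  Rsum l (fun a => F a + G a) = Rsum l F + Rsum l G.
Proof. induction l; simpl; [ring|rewrite IHl; ring]. Qed.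

Lemma Rsum_scal {A} (l : list A) c F :
  Rsum l (fun a => c * F a) = c * Rsum l F.
Proof. induction l; simpl; [ring|rewrite IHl; ring]. Qed.

Lemma Rsum_ext {A} (l : list A) F G :
  (forall a, In a l -> F a = G a) -> Rsum l F = Rsum l G.
Proof.
  induction l; simpl; intros; auto. rewrite H by auto. rewrite IHl; auto.
Qed.

Lemma Rsum_const {A} (l : list A) c : Rsum l (fun _ => c) = INR (length l) * c.
Proof. induction l; simpl length; [simpl; ring| rewrite S_INR; simpl; rewrite IHl; ring]. Qed.

Lemma Rsum_zero {A} (l : list A) : Rsum l (fun _ => 0) = 0.
Proof. rewrite Rsum_const; ring. Qed.

Lemma Rsum_filter {A} (l : list A) p F :
  Rsum (filter p l) F = Rsum l (fun a => if p a then F a else 0).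
Proof. induction l; simpl; auto. destruct (p a); simpl; rewrite IHl; ring. Qed.

Lemma Rsum_pairs (la lb : list Z) F :
  Rsum (pairs la lb) F = Rsum la (fun a => Rsum lb (fun b => F (a, b))).
Proof.
  induction la; simpl; auto. unfold pairs in *; simpl. rewrite Rsum_app, IHla.
  f_equal. clear. induction lb; simpl; auto. rewrite IHlb; auto.
Qed.

Lemma Zrange_S a n : Zrange a (S n) = a :: Zrange (a + 1) n.
Proof.
  unfold Zrange. simpl. f_equal; [lia|]. rewrite <- seq_shift, map_map.
  apply map_ext. intro k. lia.
Qed.

Lemma Zrange_app a n k : Zrange a (n + k) = Zrange a n ++ Zrange (a + Z.of_nat n) k.
Proof.
  revert a. induction n; intro a.
  - rewrite Nat.add_0_l. unfold Zrange at 2. simpl. f_equal. lia.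
  - rewrite Nat.add_succ_l, !Zrange_S, IHn. rewrite <- app_comm_cons. f_equal.
    f_equal. f_equal. lia.
Qed.

Lemma Zrange_length a n : length (Zrange a n) = n.
Proof. unfold Zrange. now rewrite length_map, length_seq. Qed.

Lemma In_Zrange a n z : In z (Zrange a n) <-> (a <= z < a + Z.of_nat n)%Z.
Proof.
  unfold Zrange. rewrite in_map_iff. split.
  - intros [k [<- Hk]]. apply in_seq in Hk. lia.
  - intros H. exists (Z.to_nat (z - a)). split; [lia|]. apply in_seq. lia.
Qed.

Lemma Rsum_delta a n z0 (F : Z -> R) :
  Rsum (Zrange a n) (fun z => if (z =? z0)%Z then F z else 0) =
  if andb (a <=? z0)%Z (z0 <? a + Z.of_nat n)%Z then F z0 else 0.
Proof.
  revert a. induction n; intro a.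
  - simpl. destruct (andb (a <=? z0)%Z (z0 <? a + 0)%Z) eqn:E; auto.
    apply andb_true_iff in E; destruct E as [E1 E2]. apply Z.leb_le in E1.
    apply Z.ltb_lt in E2. lia.
  - rewrite Zrange_S. simpl. rewrite IHn.
    destruct (Z.eqb_spec a z0).
    + subst. destruct (andb (z0 + 1 <=? z0)%Z _) eqn:E.
      * apply andb_true_iff in E; destruct E as [E1 _]. apply Z.leb_le in E1. lia.
      * match goal with |- _ = if ?b then _ else _ => replace b with true end.
        ring. symmetry. apply andb_true_iff. split; [apply Z.leb_le|apply Z.ltb_lt]; lia.
    + rewrite Rplus_0_l. f_equal.
      destruct (andb (a + 1 <=? z0)%Z (z0 <? a + 1 + Z.of_nat n)%Z) eqn:E1;
      match goal with |- _ = if ?b then _ else _ => destruct b eqn:E2 end; auto;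
      repeat rewrite andb_true_iff in *; repeat rewrite andb_false_iff in *;
      repeat rewrite Z.leb_le in *; repeat rewrite Z.ltb_lt in *;
      repeat rewrite Z.leb_gt in *; repeat rewrite Z.ltb_ge in *; lia.
Qed.

Lemma tel (t phi : R) (n : nat) (a : Z) :
  2 * sin (t / 2) * Rsum (Zrange a n) (fun l => cos (IZR l * t + phi)) =
  sin ((IZR a + INR n - 1/2) * t + phi) - sin ((IZR a - 1/2) * t + phi).
Proof.
  revert a. induction n; intro a.
  - unfold Zrange; simpl Rsum. rewrite Rmult_0_r.
    replace (IZR a + INR 0 - 1/2) with (IZR a - 1/2) by (simpl; ring). ring.
  - rewrite Zrange_S. simpl Rsum. rewrite Rmult_plus_distr_l.
    change (fold_right (fun a0 acc => cos (IZR a0 * t + phi) + acc) 0 (Zrange (a + 1) n))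
      with (Rsum (Zrange (a + 1) n) (fun l => cos (IZR l * t + phi))).
    rewrite IHn, S_INR, plus_IZR.
    replace ((IZR a + 1 - 1/2) * t + phi) with ((IZR a * t + phi) + t / 2) by field.
    replace ((IZR a - 1/2) * t + phi) with ((IZR a * t + phi) - t / 2) by field.
    replace ((IZR a + 1 + INR n - 1/2) * t + phi) with ((IZR a + (INR n + 1) - 1/2) * t + phi) by ring.
    rewrite (sin_plus (IZR a * t + phi)), (sin_minus (IZR a * t + phi)). ring.
Qed.

Lemma Rsum_length_const {A} (l : list A) c F :
  (forall a, In a l -> F a = c) -> Rsum l F = INR (length l) * c.
Proof. intro H. rewrite (Rsum_ext _ F (fun _ => c)) by auto. apply Rsum_const. Qed.

Lemma sin_half_nz (x : Z) (n : R) : 0 < n ->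
  sin (PI * IZR x / n) = 0 -> exists k, IZR x = IZR k * n.
Proof.
  intros Hn H. apply sin_eq_0_0 in H. destruct H as [k Hk]. exists k.
  pose proof PI_RGT_0.
  apply Rmult_eq_reg_l with (PI / n). 2:{ apply Rgt_not_eq. apply Rdiv_lt_0_compat; lra. }
  replace (PI / n * IZR x) with (PI * IZR x / n) by (field; lra).
  rewrite Hk. field. lra.
Qed.

Lemma clfull (n : nat) (a e : Z) (phi : R) : (0 < n)%nat ->
  Rsum (Zrange a n) (fun l => cos (IZR l * (2 * PI * IZR e / INR n) + phi)) =
  if (e mod Z.of_nat n =? 0)%Z then INR n * cos phi else 0.
Proof.
  intro Hn. assert (HnR : 0 < INR n) by (apply lt_0_INR; lia).
  destruct (Z.eqb_spec (e mod Z.of_nat n) 0) as [E|E].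
  - apply Zmod_divides in E; [|lia]. destruct E as [q ->].
    rewrite (Rsum_length_const _ (cos phi)), Zrange_length; auto.
    intros l _. rewrite mult_IZR, <- INR_IZR_INZ.
    replace (IZR l * (2 * PI * (INR n * IZR q) / INR n) + phi) with (phi + 2 * IZR (l * q) * PI)
      by (rewrite mult_IZR; field; lra). apply cos_Zper.
  - set (t := 2 * PI * IZR e / INR n).
    assert (Hs : sin (t / 2) <> 0).
    { intro H. unfold t in H. replace (2 * PI * IZR e / INR n / 2) with (PI * IZR e / INR n) in H by (field; lra).
      apply sin_half_nz in H; auto. destruct H as [k Hk]. apply E.
      rewrite INR_IZR_INZ, <- mult_IZR in Hk. apply eq_IZR in Hk. rewrite Hk.
      apply Z_mod_mult. }
    pose proof (tel t phi n a) as T.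
    replace ((IZR a + INR n - 1/2) * t + phi) with (((IZR a - 1/2) * t + phi) + 2 * IZR e * PI) in T
      by (unfold t; field; lra).
    rewrite sin_Zper in T.
    apply Rmult_eq_reg_l with (2 * sin (t / 2)); [|apply Rmult_integral_contrapositive; split; lra].
    rewrite T. ring.
Qed.

Lemma Rsum_minus {A} (l : list A) F G :
  Rsum l (fun a => F a - G a) = Rsum l F - Rsum l G.
Proof. induction l; simpl; [ring|rewrite IHl; ring]. Qed.

Definition tau (M : nat) (k : Z) : R :=
  if orb (k =? 0)%Z (k =? Z.of_nat M)%Z then 1 else 2.

Lemma trap (M : nat) (j : Z) : (0 < M)%nat ->
  Rsum (Zrange 0 (S M)) (fun k => tau M k * cos (IZR k * IZR j * PI / INR M)) =
  if (j mod (2 * Z.of_nat M) =? 0)%Z then 2 * INR M else 0.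
Proof.
  intro HM. assert (HMR : 0 < INR M) by (apply lt_0_INR; lia).
  set (C := fun k : Z => cos (IZR k * IZR j * PI / INR M)).
  transitivity (2 * Rsum (Zrange 0 (S M)) C - C 0%Z - C (Z.of_nat M)).
  { rewrite (Rsum_ext _ _ (fun k => (2 * C k - (if (k =? 0)%Z then C k else 0))
                                  - (if (k =? Z.of_nat M)%Z then C k else 0))).
    2:{ intros k _. unfold tau. destruct (Z.eqb_spec k 0); destruct (Z.eqb_spec k (Z.of_nat M));
        unfold C; simpl; try lia; ring. }
    rewrite !Rsum_minus, Rsum_scal, !Rsum_delta.
    replace (andb (0 <=? 0)%Z (0 <? 0 + Z.of_nat (S M))%Z) with true
      by (symmetry; apply andb_true_iff; split; [apply Z.leb_le|apply Z.ltb_lt]; lia).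
    replace (andb (0 <=? Z.of_nat M)%Z (Z.of_nat M <? 0 + Z.of_nat (S M))%Z) with true
      by (symmetry; apply andb_true_iff; split; [apply Z.leb_le|apply Z.ltb_lt]; lia).
    reflexivity. }
  assert (CM : C (Z.of_nat M) = if Z.even j then 1 else -1).
  { unfold C. rewrite <- INR_IZR_INZ. rewrite <- cos_Zpi. f_equal. field. lra. }
  assert (C0 : C 0%Z = 1). { unfold C. replace (IZR 0 * IZR j * PI / INR M) with 0 by (simpl; field; lra). apply cos_0. }
  destruct (Z.eqb_spec (j mod (2 * Z.of_nat M)) 0) as [E|E].
  - apply Zmod_divides in E; [|lia]. destruct E as [q Hq].
    rewrite (Rsum_length_const _ 1), Zrange_length.
    2:{ intros k _. unfold C. rewrite Hq, mult_IZR, mult_IZR, <- INR_IZR_INZ.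
        replace (IZR k * (2 * INR M * IZR q) * PI / INR M) with (0 + 2 * IZR (k * q) * PI)
          by (rewrite mult_IZR; field; lra). rewrite cos_Zper. apply cos_0. }
    rewrite C0, CM. replace (Z.even j) with true.
    2:{ rewrite Hq. symmetry. rewrite <- Z.mul_assoc. apply Z.even_spec. eexists; reflexivity. }
    rewrite S_INR. ring.
  - set (t := PI * IZR j / INR M).
    assert (Hs : sin (t / 2) <> 0).
    { intro H. unfold t in H. replace (PI * IZR j / INR M / 2) with (PI * IZR j / (2 * INR M)) in H by (field; lra).
      apply sin_half_nz in H; [|lra]. destruct H as [k Hk]. apply E.
      rewrite INR_IZR_INZ in Hk. replace (IZR k * (2 * IZR (Z.of_nat M))) with (IZR (k * (2 * Z.of_nat M))) in Hk
        by (rewrite !mult_IZR; reflexivity).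
      apply eq_IZR in Hk. rewrite Hk. apply Z_mod_mult. }
    pose proof (tel t 0 (S M) 0) as T.
    rewrite (Rsum_ext _ (fun l => cos (IZR l * t + 0)) C) in T.
    2:{ intros k _. unfold C, t. f_equal. field. lra. }
    assert (Hsum : Rsum (Zrange 0 (S M)) C = (1 + C (Z.of_nat M)) / 2).
    { apply Rmult_eq_reg_l with (2 * sin (t / 2)); [|apply Rmult_integral_contrapositive; split; lra].
      rewrite T. rewrite S_INR. simpl IZR.
      replace ((0 + (INR M + 1) - 1 / 2) * t + 0) with (IZR j * PI + t / 2) by (unfold t; field; lra).
      replace ((0 - 1 / 2) * t + 0) with (- (t / 2)) by field.
      rewrite sin_plus, sin_Zpi, sin_neg, CM, cos_Zpi. destruct (Z.even j); field. }
    rewrite Hsum, C0. field.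
Qed.

Lemma par_sum (a p : Z) (n : nat) (t phi : R) :
  Rsum (Zrange a n) (fun l => (if Z.even (p + l) then 1 else 0) * cos (IZR l * t + phi)) =
  / 2 * Rsum (Zrange a n) (fun l => cos (IZR l * t + phi)) +
  cos (IZR p * PI) / 4 * (Rsum (Zrange a n) (fun l => cos (IZR l * (t + PI) + phi)) +
                          Rsum (Zrange a n) (fun l => cos (IZR l * (t - PI) + phi))).
Proof.
  rewrite <- !Rsum_scal, <- Rsum_plus, <- Rsum_scal, <- Rsum_plus.
  apply Rsum_ext. intros l _. rewrite even_ind, plus_IZR.
  rewrite Rmult_plus_distr_r, (cos_plus (IZR p * PI)), !sin_Zpi.
  replace (IZR l * (t + PI) + phi) with ((IZR l * t + phi) + IZR l * PI) by ring.
  replace (IZR l * (t - PI) + phi) with ((IZR l * t + phi) - IZR l * PI) by ring.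
  rewrite (cos_plus (IZR l * t + phi)), (cos_minus (IZR l * t + phi)), !sin_Zpi. field.
Qed.

Lemma mod_zero_small (x n : Z) : (0 < n)%Z -> (- n < x < n)%Z -> (x mod n =? 0)%Z = (x =? 0)%Z.
Proof.
  intros Hn Hx. destruct (Z.eqb_spec x 0).
  - subst. rewrite Z.mod_0_l by lia. reflexivity.
  - apply Z.eqb_neq. intro E. apply Zmod_divides in E; [|lia]. destruct E as [c Hc]. subst x.
    assert (c <= -1 \/ c = 0 \/ c >= 1)%Z as [H|[H|H]] by lia; nia.
Qed.

Lemma mod_zero_small2 (x n : Z) : (0 < n)%Z -> (0 <= x <= n)%Z ->
  (x mod n =? 0)%Z = orb (x =? 0)%Z (x =? n)%Z.
Proof.
  intros Hn Hx. destruct (Z.eqb_spec x 0); destruct (Z.eqb_spec x n); simpl.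
  - subst. rewrite Z.mod_0_l by lia. reflexivity.
  - subst. rewrite Z.mod_0_l by lia. reflexivity.
  - subst. rewrite Z.mod_same by lia. reflexivity.
  - apply Z.eqb_neq. intro E. apply Zmod_divides in E; [|lia]. destruct E as [c Hc]. subst x.
    assert (c <= -1 \/ c = 0 \/ c = 1 \/ c >= 2)%Z as [H|[H|[H|H]]] by lia; nia.
Qed.

Lemma inGamma_spec m1 m2 g1 g2 : inGamma m1 m2 (g1, g2) = true <->
  (0 <= g1 <= 2 * Z.of_nat m1 /\ - Z.of_nat m2 < g2 <= Z.of_nat m2)%Z /\ Z.even (g1 + g2) = true.
Proof.
  unfold inGamma. rewrite !andb_true_iff, !Z.leb_le, !Z.ltb_lt. tauto.
Qed.

Lemma inI_spec m1 m2 i1 i2 : inI m1 m2 (i1, i2) = true <->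
  (0 <= i1 <= Z.of_nat m1 /\ - 2 * Z.of_nat m2 < i2 <= 2 * Z.of_nat m2)%Z /\
  (i1 = Z.of_nat m1 -> i2 <= 0)%Z /\ Z.even (i1 + i2) = true.
Proof.
  unfold inI. rewrite !andb_true_iff, !Z.leb_le, !Z.ltb_lt.
  destruct (Z.eqb_spec i1 (Z.of_nat m1)).
  - rewrite Z.leb_le. intuition.
  - intuition.
Qed.

Lemma In_Gammaset m1 m2 g : In g (Gammaset m1 m2) -> inGamma m1 m2 g = true.
Proof. unfold Gammaset. rewrite filter_In. tauto. Qed.

Lemma In_Iset m1 m2 i : In i (Iset m1 m2) -> inI m1 m2 i = true.
Proof. unfold Iset. rewrite filter_In. tauto. Qed.

Lemma Rsum_Iset m1 m2 F : Rsum (Iset m1 m2) F =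
  Rsum (Zrange 0 (S m1)) (fun i1 => Rsum (Zrange (- 2 * Z.of_nat m2 + 1) (4 * m2))
     (fun i2 => if inI m1 m2 (i1, i2) then F (i1, i2) else 0)).
Proof. unfold Iset. rewrite Rsum_filter, Rsum_pairs. reflexivity. Qed.

Lemma Rsum_Gammaset m1 m2 F : Rsum (Gammaset m1 m2) F =
  Rsum (Zrange 0 (S (2 * m1))) (fun g1 => Rsum (Zrange (- Z.of_nat m2 + 1) (2 * m2))
     (fun g2 => if inGamma m1 m2 (g1, g2) then F (g1, g2) else 0)).
Proof. unfold Gammaset. rewrite Rsum_filter, Rsum_pairs. reflexivity. Qed.

Lemma clfull' (n : nat) (a e : Z) (phi t : R) : (0 < n)%nat ->
  t = 2 * PI * IZR e / INR n ->
  Rsum (Zrange a n) (fun l => cos (IZR l * t + phi)) =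
  if (e mod Z.of_nat n =? 0)%Z then INR n * cos phi else 0.
Proof. intros Hn ->. now apply clfull. Qed.

Lemma Rsum_if_ext {A} (l : list A) (P : A -> bool) (F G : A -> R) :
  (forall a, In a l -> (if P a then F a else 0) = G a) ->
  Rsum l (fun a => if P a then F a else 0) = Rsum l G.
Proof. apply Rsum_ext. Qed.

Lemma row_ortho m1 m2 (Hm1 : (0 < m1)%nat) (Hm2 : (0 < m2)%nat) (a1 b1 d i1 : Z) (phi W : R) :
  (0 <= a1 <= 2 * Z.of_nat m1)%Z -> (0 <= b1 <= 2 * Z.of_nat m1)%Z ->
  (- 2 * Z.of_nat m2 < d < 2 * Z.of_nat m2)%Z -> Z.even (a1 + b1 + d) = true ->
  (0 <= i1 <= Z.of_nat m1)%Z ->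
  Rsum (Zrange (- 2 * Z.of_nat m2 + 1) (4 * m2))
    (fun i2 => if inI m1 m2 (i1, i2) then
       weight m1 m2 (i1, i2) * (cos (IZR a1 * IZR i1 * PI / (2 * INR m1)) *
         cos (IZR b1 * IZR i1 * PI / (2 * INR m1)) *
         cos (IZR i2 * (IZR d * PI / (2 * INR m2)) + phi)) else 0) =
  tau m1 i1 / (4 * INR m1 * INR m2) *
    (cos (IZR a1 * IZR i1 * PI / (2 * INR m1)) * cos (IZR b1 * IZR i1 * PI / (2 * INR m1))) *
    (2 * INR m2 * (if (d =? 0)%Z then cos phi else 0)).
Proof.
  intros Ha Hb Hd Hpar Hi.
  assert (Hm1R : 0 < INR m1) by (apply lt_0_INR; lia).
  assert (Hm2R : 0 < INR m2) by (apply lt_0_INR; lia).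
  pose proof PI_RGT_0 as HPI.
  set (ca := cos (IZR a1 * IZR i1 * PI / (2 * INR m1))).
  set (cb := cos (IZR b1 * IZR i1 * PI / (2 * INR m1))).
  set (w := if (i1 =? 0)%Z then 1 / (4 * INR m1 * INR m2) else 2 / (4 * INR m1 * INR m2)).
  set (t := IZR d * PI / (2 * INR m2)).
  destruct (Z.eq_dec i1 (Z.of_nat m1)) as [Em|Em].
  -
    assert (Hw : w = 2 / (4 * INR m1 * INR m2)).
    { unfold w. destruct (Z.eqb_spec i1 0); [lia|reflexivity]. }
    assert (Ht : tau m1 i1 = 1).
    { unfold tau. rewrite Em, Z.eqb_refl, orb_true_r. reflexivity. }
    rewrite Ht.
    destruct (Z.even a1) eqn:Ea1; [destruct (Z.even b1) eqn:Eb1|].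
    + rewrite Z.even_add, Z.even_add, Ea1, Eb1 in Hpar. simpl in Hpar.
      destruct (Z.Even_or_Odd d) as [[h Hh]|[h Hh]]; [|subst d; rewrite Z.even_odd in Hpar; destruct (Z.even (2*h+1)); discriminate].
      replace (4 * m2)%nat with (2 * m2 + 2 * m2)%nat by lia.
      rewrite Zrange_app, Rsum_app.
      rewrite (Rsum_if_ext _ _ _ (fun i2 => (w * (ca * cb)) * ((if Z.even (i1 + i2) then 1 else 0) * cos (IZR i2 * t + phi)))).
      2:{ intros i2 Hi2. apply In_Zrange in Hi2.
          destruct (inI m1 m2 (i1, i2)) eqn:E.
          - apply inI_spec in E. destruct E as [_ [_ E]]. rewrite E. unfold w, weight; simpl fst. ring.
          - destruct (Z.even (i1 + i2)) eqn:E2; [|ring].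
            exfalso. assert (inI m1 m2 (i1, i2) = true); [|congruence].
            apply inI_spec. rewrite Nat2Z.inj_mul in Hi2. split; [|split; [intro|exact E2]]; lia. }
      rewrite (Rsum_if_ext _ _ _ (fun _ => 0)).
      2:{ intros i2 Hi2. apply In_Zrange in Hi2.
          destruct (inI m1 m2 (i1, i2)) eqn:E; auto.
          apply inI_spec in E. rewrite Nat2Z.inj_mul in Hi2. lia. }
      rewrite Rsum_zero, Rplus_0_r, Rsum_scal, par_sum.
      assert (H2 : (0 < 2 * m2)%nat) by lia.
      rewrite (clfull' _ _ h _ _ H2), (clfull' _ _ (h + Z.of_nat m2) _ _ H2),
              (clfull' _ _ (h - Z.of_nat m2) _ _ H2).
      2,3,4: unfold t; rewrite Hh; rewrite ?plus_IZR, ?minus_IZR, ?mult_IZR, mult_INR, <- ?INR_IZR_INZ; simpl (INR 2); simpl (IZR 2); field; lra.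
      rewrite Nat2Z.inj_mul.
      rewrite !mod_zero_small by lia.
      replace (h + Z.of_nat m2 =? 0)%Z with false by (symmetry; apply Z.eqb_neq; lia).
      replace (h - Z.of_nat m2 =? 0)%Z with false by (symmetry; apply Z.eqb_neq; lia).
      subst d. destruct (Z.eqb_spec h 0); destruct (Z.eqb_spec (2 * h) 0); try lia;
        rewrite Hw, ?mult_INR; simpl (INR 2); field; lra.
    +
      assert (Hcb : cb = 0).
      { unfold cb. rewrite Em, <- INR_IZR_INZ.
        replace (IZR b1 * INR m1 * PI / (2 * INR m1)) with (IZR b1 * PI / 2) by (field; lra).
        now apply cos_odd_half. }
      rewrite (Rsum_if_ext _ _ _ (fun _ => 0)).
      2:{ intros. destruct inI; auto. rewrite Hcb. ring. }
      rewrite Rsum_zero, Hcb. ring.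
    + assert (Hca : ca = 0).
      { unfold ca. rewrite Em, <- INR_IZR_INZ.
        replace (IZR a1 * INR m1 * PI / (2 * INR m1)) with (IZR a1 * PI / 2) by (field; lra).
        now apply cos_odd_half. }
      rewrite (Rsum_if_ext _ _ _ (fun _ => 0)).
      2:{ intros. destruct inI; auto. rewrite Hca. ring. }
      rewrite Rsum_zero, Hca. ring.
  -
    assert (Hw : w = tau m1 i1 / (4 * INR m1 * INR m2)).
    { unfold w, tau. destruct (Z.eqb_spec i1 0); destruct (Z.eqb_spec i1 (Z.of_nat m1)); simpl; try lia; field; lra. }
    rewrite (Rsum_if_ext _ _ _ (fun i2 => (w * (ca * cb)) * ((if Z.even (i1 + i2) then 1 else 0) * cos (IZR i2 * t + phi)))).
    2:{ intros i2 Hi2. apply In_Zrange in Hi2.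
        destruct (inI m1 m2 (i1, i2)) eqn:E.
        - apply inI_spec in E. destruct E as [_ [_ E]]. rewrite E. unfold w, weight; simpl fst. ring.
        - destruct (Z.even (i1 + i2)) eqn:E2; [|ring].
          exfalso. assert (inI m1 m2 (i1, i2) = true); [|congruence].
          apply inI_spec. rewrite Nat2Z.inj_mul in Hi2. split; [|split; [intro|exact E2]]; lia. }
    rewrite Rsum_scal, par_sum.
    assert (H4 : (0 < 4 * m2)%nat) by lia.
    rewrite (clfull' _ _ d _ _ H4), (clfull' _ _ (d + 2 * Z.of_nat m2) _ _ H4),
            (clfull' _ _ (d - 2 * Z.of_nat m2) _ _ H4).
    2,3,4: unfold t; rewrite ?plus_IZR, ?minus_IZR, ?mult_IZR, mult_INR, <- ?INR_IZR_INZ; simpl (INR 4); simpl (IZR 2); field; lra.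
    rewrite Nat2Z.inj_mul.
    rewrite !mod_zero_small by lia.
    replace (d + 2 * Z.of_nat m2 =? 0)%Z with false by (symmetry; apply Z.eqb_neq; lia).
    replace (d - 2 * Z.of_nat m2 =? 0)%Z with false by (symmetry; apply Z.eqb_neq; lia).
    rewrite Hw. destruct (Z.eqb_spec d 0); rewrite ?mult_INR; simpl (INR 4); field; lra.
Qed.

Definition Nval (m1 : nat) (a1 : Z) : R :=
  if orb (a1 =? 0)%Z (a1 =? 2 * Z.of_nat m1)%Z then 1 else / 2.

Lemma even_ex z : Z.even z = true -> exists q, z = (2 * q)%Z.
Proof. intro H. apply Z.even_spec in H. destruct H as [q Hq]. now exists q. Qed.

Lemma even_of z q : z = (2 * q)%Z -> Z.even z = true.
Proof. intros ->. apply Z.even_spec. now exists q. Qed.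

Lemma cos_prod x y : cos x * cos y = (cos (x - y) + cos (x + y)) / 2.
Proof. rewrite cos_minus, cos_plus. field. Qed.

Lemma ortho_sum m1 m2 (Hm1 : (0 < m1)%nat) (Hm2 : (0 < m2)%nat) a1 a2 b1 b2 phi :
  inGamma m1 m2 (a1, a2) = true -> inGamma m1 m2 (b1, b2) = true ->
  Rsum (Iset m1 m2) (fun i => weight m1 m2 i *
     (cos (IZR a1 * IZR (fst i) * PI / (2 * INR m1)) *
      cos (IZR b1 * IZR (fst i) * PI / (2 * INR m1)) *
      cos (IZR (snd i) * (IZR (a2 - b2) * PI / (2 * INR m2)) + phi))) =
  if andb (a1 =? b1)%Z (a2 =? b2)%Z then Nval m1 a1 * cos phi else 0.
Proof.
  intros HA HB. apply inGamma_spec in HA as [[Ha1 Ha2] Pa].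
  apply inGamma_spec in HB as [[Hb1 Hb2] Pb].
  assert (Hm1R : 0 < INR m1) by (apply lt_0_INR; lia).
  assert (Hm2R : 0 < INR m2) by (apply lt_0_INR; lia).
  pose proof PI_RGT_0 as HPI.
  apply even_ex in Pa as [qa Hqa]. apply even_ex in Pb as [qb Hqb].
  rewrite Rsum_Iset.
  set (X := if (a2 - b2 =? 0)%Z then cos phi else 0).
  rewrite (Rsum_ext _ _ (fun i1 => (2 * INR m2 * X / (4 * INR m1 * INR m2)) *
       (tau m1 i1 * (cos (IZR a1 * IZR i1 * PI / (2 * INR m1)) * cos (IZR b1 * IZR i1 * PI / (2 * INR m1)))))).
  2:{ intros i1 Hi1. apply In_Zrange in Hi1. cbn [fst snd].
      rewrite row_ortho; auto; try lia.
      - unfold X. field. lra.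
      - apply (even_of _ (qa + qb - b2)). lia. }
  rewrite Rsum_scal.
  unfold X. destruct (Z.eqb_spec (a2 - b2) 0) as [E|E].
  2:{ replace (b2 =? a2)%Z with false. 
      - replace (a2 =? b2)%Z with false by (symmetry; apply Z.eqb_neq; lia).
        rewrite andb_false_r. field. lra.
      - symmetry; apply Z.eqb_neq; lia. }
  replace (a2 =? b2)%Z with true by (symmetry; apply Z.eqb_eq; lia). rewrite andb_true_r.
  assert (Hj1 : (a1 - b1 = 2 * (qa - qb))%Z) by lia.
  assert (Hj2 : (a1 + b1 = 2 * (qa + qb - a2))%Z) by lia.
  rewrite (Rsum_ext _ _ (fun i1 => / 2 * (tau m1 i1 * cos (IZR i1 * IZR (qa - qb) * PI / INR m1)) +
                                   / 2 * (tau m1 i1 * cos (IZR i1 * IZR (qa + qb - a2) * PI / INR m1)))).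
  2:{ intros i1 _. rewrite cos_prod.
      replace (IZR a1 * IZR i1 * PI / (2 * INR m1) - IZR b1 * IZR i1 * PI / (2 * INR m1))
        with (IZR i1 * IZR (qa - qb) * PI / INR m1)
        by (replace (IZR (qa - qb)) with (IZR (a1 - b1) / 2) by (rewrite Hj1, mult_IZR; field);
            rewrite minus_IZR; field; lra).
      replace (IZR a1 * IZR i1 * PI / (2 * INR m1) + IZR b1 * IZR i1 * PI / (2 * INR m1))
        with (IZR i1 * IZR (qa + qb - a2) * PI / INR m1)
        by (replace (IZR (qa + qb - a2)) with (IZR (a1 + b1) / 2) by (rewrite Hj2, mult_IZR; field);
            rewrite plus_IZR; field; lra).
      field. }
  rewrite Rsum_plus, !Rsum_scal, !trap by lia.
  rewrite (mod_zero_small2 (qa + qb - a2)) by lia. rewrite (mod_zero_small (qa - qb)) by lia.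
  unfold Nval.
  destruct (Z.eqb_spec a1 b1); destruct (Z.eqb_spec (qa - qb) 0); try lia; cbn [orb andb].
  - destruct (Z.eqb_spec a1 0); destruct (Z.eqb_spec a1 (2 * Z.of_nat m1));
    destruct (Z.eqb_spec (qa + qb - a2) 0); destruct (Z.eqb_spec (qa + qb - a2) (2 * Z.of_nat m1));
    cbn [orb andb]; try lia; field; lra.
  - destruct (Z.eqb_spec (qa + qb - a2) 0); destruct (Z.eqb_spec (qa + qb - a2) (2 * Z.of_nat m1));
    cbn [orb andb]; try lia; field; lra.
Qed.

Lemma mod_zero_range (x n : Z) : (0 < n)%Z -> (- 2 * n < x < 2 * n)%Z ->
  (x mod n =? 0)%Z = orb (orb (x =? 0)%Z (x =? n)%Z) (x =? - n)%Z.
Proof.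
  intros Hn Hx. destruct (Z.eqb_spec x 0); destruct (Z.eqb_spec x n); destruct (Z.eqb_spec x (-n)); simpl;
  try (apply Z.eqb_eq, Zmod_divides; [lia|]; subst;
       first [exists 0%Z; lia | exists 1%Z; lia | exists (-1)%Z; lia]).
  apply Z.eqb_neq. intro E. apply Zmod_divides in E; [|lia]. destruct E as [c Hc]. subst x.
  assert (c <= -2 \/ c = -1 \/ c = 0 \/ c = 1 \/ c >= 2)%Z as [H|[H|[H|[H|H]]]] by lia; subst; nia.
Qed.

Lemma INR2 : INR 2 = 2.
Proof. simpl; ring. Qed.

Lemma cos_prod3 x y z : cos x * cos y * cos z =
  (cos (x - y - z) + cos (x - y + z) + cos (x + y - z) + cos (x + y + z)) / 4.
Proof. rewrite (cos_prod x y), Rmult_comm, Rmult_div_assoc, Rmult_plus_distr_l, !(Rmult_comm (cos z)), !cos_prod. field. Qed.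

Ltac zsimp := repeat match goal with |- context [(?x =? ?y)%Z] =>
  first [ replace (x =? y)%Z with true by (symmetry; apply Z.eqb_eq; lia)
        | replace (x =? y)%Z with false by (symmetry; apply Z.eqb_neq; lia) ] end; cbn [orb andb].

Lemma dual_sum m1 m2 (Hm1 : (0 < m1)%nat) (Hm2 : (0 < m2)%nat) i1 i2 j1 j2 phi :
  inI m1 m2 (i1, i2) = true -> inI m1 m2 (j1, j2) = true ->
  Rsum (Gammaset m1 m2) (fun g =>
     cos (IZR (fst g) * IZR i1 * PI / (2 * INR m1)) *
     cos (IZR (fst g) * IZR j1 * PI / (2 * INR m1)) *
     cos (IZR (snd g) * (IZR (i2 - j2) * PI / (2 * INR m2)) + phi) / Nval m1 (fst g)) =
  if andb (i1 =? j1)%Z (i2 =? j2)%Z then cos phi / weight m1 m2 (i1, i2) else 0.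
Proof.
  intros HI HJ. apply inI_spec in HI as [[Hi1 Hi2] [Mi Pi]].
  apply inI_spec in HJ as [[Hj1 Hj2] [Mj Pj]].
  assert (Hm1R : 0 < INR m1) by (apply lt_0_INR; lia).
  assert (Hm2R : 0 < INR m2) by (apply lt_0_INR; lia).
  pose proof PI_RGT_0 as HPI.
  set (t := IZR (i2 - j2) * PI / (2 * INR m2)).
  set (SS := fun s => Rsum (Zrange (- Z.of_nat m2 + 1) (2 * m2)) (fun l => cos (IZR l * s + phi))).
  set (cc := fun g1 : Z => cos (IZR g1 * IZR i1 * PI / (2 * INR m1)) * cos (IZR g1 * IZR j1 * PI / (2 * INR m1))).
  rewrite Rsum_Gammaset.
  rewrite (Rsum_ext _ _ (fun g1 => SS t / 2 * (tau (2 * m1) g1 * cc g1) +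
                                   (SS (t + PI) + SS (t - PI)) / 4 * (tau (2 * m1) g1 * (cc g1 * cos (IZR g1 * PI))))).
  2:{ intros g1 Hg1. apply In_Zrange in Hg1.
      rewrite (Rsum_if_ext _ _ _ (fun g2 => (cc g1 / Nval m1 g1) * ((if Z.even (g1 + g2) then 1 else 0) * cos (IZR g2 * t + phi)))).
      2:{ intros g2 Hg2. apply In_Zrange in Hg2. cbn [fst snd].
          destruct (inGamma m1 m2 (g1, g2)) eqn:E.
          - apply inGamma_spec in E. destruct E as [_ E]. rewrite E. unfold cc. field.
            unfold Nval. destruct orb; lra.
          - destruct (Z.even (g1 + g2)) eqn:E2; [|ring].
            exfalso. assert (inGamma m1 m2 (g1, g2) = true); [|congruence].
            apply inGamma_spec. rewrite Nat2Z.inj_mul in *. split; [lia|exact E2]. }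
      rewrite Rsum_scal, par_sum.
      assert (Ht : / Nval m1 g1 = tau (2 * m1) g1).
      { unfold Nval, tau. rewrite Nat2Z.inj_mul. simpl (Z.of_nat 2). destruct orb; field. }
      fold (SS t) (SS (t + PI)) (SS (t - PI)).
      unfold Rdiv at 1. rewrite Ht. clearbody SS. field. }
  rewrite Rsum_plus, !Rsum_scal.
  assert (HM : (0 < 2 * m1)%nat) by lia.
  assert (E1 : Rsum (Zrange 0 (S (2 * m1))) (fun g1 => tau (2 * m1) g1 * cc g1) =
               / 2 * ((if ((i1 - j1) mod (2 * Z.of_nat (2 * m1)) =? 0)%Z then 2 * INR (2 * m1) else 0) +
                      (if ((i1 + j1) mod (2 * Z.of_nat (2 * m1)) =? 0)%Z then 2 * INR (2 * m1) else 0))).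
  { rewrite <- !trap by lia. rewrite <- Rsum_plus, <- Rsum_scal. apply Rsum_ext. intros g1 _.
    unfold cc. rewrite cos_prod, mult_INR, !minus_IZR, !plus_IZR. rewrite ?INR2.
    replace (IZR g1 * IZR i1 * PI / (2 * INR m1) - IZR g1 * IZR j1 * PI / (2 * INR m1))
      with (IZR g1 * (IZR i1 - IZR j1) * PI / (2 * INR m1)) by (field; lra).
    replace (IZR g1 * IZR i1 * PI / (2 * INR m1) + IZR g1 * IZR j1 * PI / (2 * INR m1))
      with (IZR g1 * (IZR i1 + IZR j1) * PI / (2 * INR m1)) by (field; lra).
    field. }
  assert (E2 : Rsum (Zrange 0 (S (2 * m1))) (fun g1 => tau (2 * m1) g1 * (cc g1 * cos (IZR g1 * PI))) =
     / 4 * ((if ((i1 - j1 - 2 * Z.of_nat m1) mod (2 * Z.of_nat (2 * m1)) =? 0)%Z then 2 * INR (2 * m1) else 0) +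
            (if ((i1 - j1 + 2 * Z.of_nat m1) mod (2 * Z.of_nat (2 * m1)) =? 0)%Z then 2 * INR (2 * m1) else 0) +
            (if ((i1 + j1 - 2 * Z.of_nat m1) mod (2 * Z.of_nat (2 * m1)) =? 0)%Z then 2 * INR (2 * m1) else 0) +
            (if ((i1 + j1 + 2 * Z.of_nat m1) mod (2 * Z.of_nat (2 * m1)) =? 0)%Z then 2 * INR (2 * m1) else 0))).
  { rewrite <- !trap by lia. rewrite <- !Rsum_plus, <- Rsum_scal. apply Rsum_ext. intros g1 _.
    unfold cc. rewrite cos_prod3, mult_INR. repeat rewrite ?minus_IZR, ?plus_IZR, ?mult_IZR. rewrite <- ?INR_IZR_INZ. rewrite ?INR2. simpl (IZR 2).
    replace (IZR g1 * IZR i1 * PI / (2 * INR m1) - IZR g1 * IZR j1 * PI / (2 * INR m1) - IZR g1 * PI)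
      with (IZR g1 * (IZR i1 - IZR j1 - 2 * INR m1) * PI / (2 * INR m1)) by (field; lra).
    replace (IZR g1 * IZR i1 * PI / (2 * INR m1) - IZR g1 * IZR j1 * PI / (2 * INR m1) + IZR g1 * PI)
      with (IZR g1 * (IZR i1 - IZR j1 + 2 * INR m1) * PI / (2 * INR m1)) by (field; lra).
    replace (IZR g1 * IZR i1 * PI / (2 * INR m1) + IZR g1 * IZR j1 * PI / (2 * INR m1) - IZR g1 * PI)
      with (IZR g1 * (IZR i1 + IZR j1 - 2 * INR m1) * PI / (2 * INR m1)) by (field; lra).
    replace (IZR g1 * IZR i1 * PI / (2 * INR m1) + IZR g1 * IZR j1 * PI / (2 * INR m1) + IZR g1 * PI)
      with (IZR g1 * (IZR i1 + IZR j1 + 2 * INR m1) * PI / (2 * INR m1)) by (field; lra).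
    field. }
  rewrite E1, E2. clear E1 E2.
  rewrite Nat2Z.inj_mul. simpl (Z.of_nat 2).
  rewrite !(mod_zero_range _ (2 * (2 * Z.of_nat m1))) by lia.
  destruct (Z.eqb_spec i1 j1) as [Eij|Nij].
  2:{ repeat match goal with |- context [(?x =? ?y)%Z] =>
        let H := fresh in destruct (Z.eqb_spec x y) as [H|H]; [lia|] end. simpl. field. }
  subst j1. rewrite andb_true_l.
  apply even_ex in Pi as [qi Hqi]. apply even_ex in Pj as [qj Hqj].
  set (h := (qi - qj)%Z).
  assert (Hd : (i2 - j2 = 2 * h)%Z) by (unfold h; lia).
  assert (H2 : (0 < 2 * m2)%nat) by lia.
  unfold SS.
  rewrite (clfull' _ _ h _ _ H2), (clfull' _ _ (h + Z.of_nat m2) _ _ H2),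
          (clfull' _ _ (h - Z.of_nat m2) _ _ H2).
  2,3,4: unfold t; rewrite Hd; rewrite ?plus_IZR, ?minus_IZR, ?mult_IZR, mult_INR, <- ?INR_IZR_INZ;
         rewrite ?INR2; simpl (IZR 2); field; lra.
  rewrite Nat2Z.inj_mul. simpl (Z.of_nat 2).
  rewrite !(mod_zero_range _ (2 * Z.of_nat m2)) by lia.
  unfold weight. cbn [fst].
  destruct (Z.eqb_spec i2 j2) as [E|E];
  destruct (Z.eqb_spec i1 0) as [Z0|Z0]; destruct (Z.eqb_spec i1 (Z.of_nat m1)) as [ZM|ZM];
  try lia; try (specialize (Mi ZM); specialize (Mj ZM)); zsimp;
  rewrite ?mult_INR, ?INR2; field; lra.
Qed.

Lemma Cx_eq (z w : Cx) : fst z = fst w -> snd z = snd w -> z = w.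
Proof. destruct z, w; simpl; intros; subst; auto. Qed.

Lemma Csum_ext {A} (l : list A) F G : (forall a, In a l -> F a = G a) -> Csum l F = Csum l G.
Proof. induction l; simpl; intros; auto. unfold Csum in *; simpl. rewrite H by auto. rewrite IHl; auto. Qed.

Lemma Csum_mul_l {A} (l : list A) z F : Cmul z (Csum l F) = Csum l (fun a => Cmul z (F a)).
Proof.
  induction l; unfold Csum in *; simpl.
  - unfold Cmul, C0; simpl. f_equal; ring.
  - rewrite <- IHl. destruct z, (F a), (fold_right _ _ _). unfold Cmul, Cadd; simpl. f_equal; ring.
Qed.

Lemma Csum_mul_r {A} (l : list A) z F : Cmul (Csum l F) z = Csum l (fun a => Cmul (F a) z).
Proof.
  induction l; unfold Csum in *; simpl.
  - unfold Cmul, C0; simpl. f_equal; ring.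
  - rewrite <- IHl. destruct z, (F a), (fold_right _ _ _). unfold Cmul, Cadd; simpl. f_equal; ring.
Qed.

Lemma CdivR_Csum {A} (l : list A) x F : CdivR (Csum l F) x = Csum l (fun a => CdivR (F a) x).
Proof.
  induction l; unfold Csum in *; simpl.
  - unfold CdivR, C0; simpl. f_equal; unfold Rdiv; ring.
  - rewrite <- IHl. destruct (F a), (fold_right _ _ _). unfold CdivR, Cadd; simpl. f_equal; unfold Rdiv; ring.
Qed.

Lemma Csum_add {A} (l : list A) F G : Csum l (fun a => Cadd (F a) (G a)) = Cadd (Csum l F) (Csum l G).
Proof.
  induction l; unfold Csum in *; simpl.
  - unfold Cadd, C0; simpl. f_equal; ring.
  - rewrite IHl. destruct (F a), (G a), (fold_right (fun a0 acc => Cadd (F a0) acc) _ _), (fold_right (fun a0 acc => Cadd (G a0) acc) _ _).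
    unfold Cadd; simpl. f_equal; ring.
Qed.

Lemma Csum_zero {A} (l : list A) : Csum l (fun _ => C0) = C0.
Proof. induction l; unfold Csum in *; simpl; auto. rewrite IHl. unfold Cadd, C0; simpl. f_equal; ring. Qed.

Lemma Csum_exchange {A B} (l1 : list A) (l2 : list B) F :
  Csum l1 (fun a => Csum l2 (fun b => F a b)) = Csum l2 (fun b => Csum l1 (fun a => F a b)).
Proof.
  induction l1 as [|a l1 IHl1]; [symmetry; apply Csum_zero|].
  change (Cadd (Csum l2 (fun b => F a b)) (Csum l1 (fun a => Csum l2 (fun b => F a b))) =
          Csum l2 (fun b => Cadd (F a b) (Csum l1 (fun a => F a b)))).
  rewrite IHl1, Csum_add. reflexivity.
Qed.

Lemma In_pairs la lb x y : In (x, y) (pairs la lb) <-> In x la /\ In y lb.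
Proof.
  unfold pairs. rewrite in_flat_map. split.
  - intros [a [Ha Hb]]. apply in_map_iff in Hb. destruct Hb as [b [E Hb]]. inversion E; subst; auto.
  - intros [Hx Hy]. exists x. split; auto. apply in_map_iff. exists y; auto.
Qed.

Lemma Rsum_fp_delta p a1 n1 a2 n2 y1 y2 (F : Z * Z -> R) :
  In (y1, y2) (filter p (pairs (Zrange a1 n1) (Zrange a2 n2))) ->
  Rsum (filter p (pairs (Zrange a1 n1) (Zrange a2 n2)))
    (fun x => if andb (fst x =? y1)%Z (snd x =? y2)%Z then F x else 0) = F (y1, y2).
Proof.
  intro H. apply filter_In in H as [H Hp]. apply In_pairs in H as [H1 H2].
  apply In_Zrange in H1, H2.
  rewrite Rsum_filter, Rsum_pairs.
  rewrite (Rsum_ext _ _ (fun a => if (a =? y1)%Z then (if p (a, y2) then F (a, y2) else 0) else 0)).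
  - rewrite Rsum_delta, Hp. replace (andb (a1 <=? y1)%Z (y1 <? a1 + Z.of_nat n1)%Z) with true; auto.
    symmetry. apply andb_true_iff. split; [apply Z.leb_le|apply Z.ltb_lt]; lia.
  - intros a _.
    rewrite (Rsum_ext _ _ (fun b => if (b =? y2)%Z then (if p (a, b) then (if (a =? y1)%Z then F (a, b) else 0) else 0) else 0)).
    + rewrite Rsum_delta. replace (andb (a2 <=? y2)%Z (y2 <? a2 + Z.of_nat n2)%Z) with true.
      * destruct (a =? y1)%Z, (p (a, y2)); auto.
      * symmetry. apply andb_true_iff. split; [apply Z.leb_le|apply Z.ltb_lt]; lia.
    + intros b _. cbn [fst snd]. destruct (b =? y2)%Z, (a =? y1)%Z, (p (a, b)); auto.
Qed.

Lemma Csum_fp_delta p a1 n1 a2 n2 y1 y2 (F : Z * Z -> Cx) :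
  In (y1, y2) (filter p (pairs (Zrange a1 n1) (Zrange a2 n2))) ->
  Csum (filter p (pairs (Zrange a1 n1) (Zrange a2 n2)))
    (fun x => if andb (fst x =? y1)%Z (snd x =? y2)%Z then F x else C0) = F (y1, y2).
Proof.
  intro H. rewrite Csum_split. apply Cx_eq; simpl.
  - rewrite <- (Rsum_fp_delta p a1 n1 a2 n2 y1 y2 (fun x => fst (F x))) by auto.
    apply Rsum_ext. intros. destruct andb; auto.
  - rewrite <- (Rsum_fp_delta p a1 n1 a2 n2 y1 y2 (fun x => snd (F x))) by auto.
    apply Rsum_ext. intros. destruct andb; auto.
Qed.

Lemma inner_chi m1 m2 (Hm1 : (0 < m1)%nat) (Hm2 : (0 < m2)%nat) a b :
  inGamma m1 m2 a = true -> inGamma m1 m2 b = true ->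
  inner_w m1 m2 (chi m1 m2 a) (chi m1 m2 b) =
  (if andb (fst a =? fst b)%Z (snd a =? snd b)%Z then Nval m1 (fst a) else 0, 0).
Proof.
  destruct a as [a1 a2], b as [b1 b2]. intros Ha Hb.
  assert (Hm2R : 0 < INR m2) by (apply lt_0_INR; lia).
  unfold inner_w. rewrite Csum_split. apply Cx_eq; cbn [fst snd].
  - rewrite (Rsum_ext _ _ (fun i => weight m1 m2 i *
     (cos (IZR a1 * IZR (fst i) * PI / (2 * INR m1)) *
      cos (IZR b1 * IZR (fst i) * PI / (2 * INR m1)) *
      cos (IZR (snd i) * (IZR (a2 - b2) * PI / (2 * INR m2)) + 0)))).
    + rewrite ortho_sum by auto. rewrite cos_0. destruct andb; ring.
    + intros [i1 i2] _. unfold chi, Cmul, Cconj, RtoC, Cexpi. cbn [fst snd].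
      rewrite Rplus_0_r.
      replace (IZR i2 * (IZR (a2 - b2) * PI / (2 * INR m2))) with
        (IZR a2 * IZR i2 * PI / (2 * INR m2) - IZR b2 * IZR i2 * PI / (2 * INR m2))
        by (rewrite minus_IZR; field; lra).
      rewrite cos_minus. ring.
  - rewrite (Rsum_ext _ _ (fun i => weight m1 m2 i *
     (cos (IZR a1 * IZR (fst i) * PI / (2 * INR m1)) *
      cos (IZR b1 * IZR (fst i) * PI / (2 * INR m1)) *
      cos (IZR (snd i) * (IZR (a2 - b2) * PI / (2 * INR m2)) + - (PI / 2))))).
    + rewrite ortho_sum by auto. rewrite cos_neg, cos_PI2. destruct andb; ring.
    + intros [i1 i2] _. unfold chi, Cmul, Cconj, RtoC, Cexpi. cbn [fst snd].
      rewrite cos_plus, cos_neg, sin_neg, cos_PI2, sin_PI2.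
      replace (IZR i2 * (IZR (a2 - b2) * PI / (2 * INR m2))) with
        (IZR a2 * IZR i2 * PI / (2 * INR m2) - IZR b2 * IZR i2 * PI / (2 * INR m2))
        by (rewrite minus_IZR; field; lra).
      rewrite sin_minus. ring.
Qed.

Lemma normsq_chi m1 m2 (Hm1 : (0 < m1)%nat) (Hm2 : (0 < m2)%nat) g :
  inGamma m1 m2 g = true -> normsq_w m1 m2 (chi m1 m2 g) = Nval m1 (fst g).
Proof.
  intro H. unfold normsq_w, Cre. rewrite inner_chi by auto. rewrite !Z.eqb_refl. reflexivity.
Qed.

Lemma Nval_pos m1 g1 : 0 < Nval m1 g1.
Proof. unfold Nval. destruct orb; lra. Qed.

Lemma Xfun_node m1 m2 (Hm1 : (0 < m1)%nat) (Hm2 : (0 < m2)%nat) g i :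
  (0 <= fst i <= Z.of_nat m1)%Z ->
  Xfun g (r_node m1 (fst i)) (theta_node m2 (snd i)) = chi m1 m2 g i.
Proof.
  destruct g as [g1 g2], i as [i1 i2]. cbn [fst snd]. intro Hi.
  assert (Hm1R : 0 < INR m1) by (apply lt_0_INR; lia).
  assert (Hm2R : 0 < INR m2) by (apply lt_0_INR; lia).
  pose proof PI_RGT_0.
  unfold Xfun, chi, Tcheb, r_node, theta_node. cbn [fst snd].
  rewrite acos_cos.
  - f_equal; [f_equal; f_equal; field; lra|f_equal; field; lra].
  - rewrite INR_IZR_INZ in *. assert (0 <= IZR i1 <= IZR (Z.of_nat m1)) by (split; apply IZR_le; lia).
    split.
    + apply Rmult_le_pos; [apply Rmult_le_pos; lra|]. apply Rlt_le, Rinv_0_lt_compat; lra.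
    + set (M := IZR (Z.of_nat m1)) in *.
      assert (IZR i1 / M <= 1).
      { apply Rmult_le_reg_r with M; [lra|]. unfold Rdiv. rewrite Rmult_assoc, Rinv_l; lra. }
      replace (IZR i1 * PI / (2 * M)) with (PI / 2 * (IZR i1 / M)) by (field; lra).
      nra.
Qed.

Lemma cx_id1 (w c x y : Cx) : Cmul w (Cmul (Cmul c x) y) = Cmul c (Cmul w (Cmul x y)).
Proof. destruct w, c, x, y. unfold Cmul; simpl. f_equal; ring. Qed.

Lemma cx_id2 (w fj cj ci : Cx) (N : R) :
  Cmul (CdivR (Cmul w (Cmul fj cj)) N) ci = Cmul fj (Cmul w (CdivR (Cmul cj ci) N)).
Proof. destruct w, fj, cj, ci. unfold Cmul, CdivR; simpl. f_equal; unfold Rdiv; ring. Qed.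

Lemma Pfun_node m1 m2 (Hm1 : (0 < m1)%nat) (Hm2 : (0 < m2)%nat) c i :
  inI m1 m2 i = true ->
  Pfun m1 m2 c (r_node m1 (fst i)) (theta_node m2 (snd i)) =
  Csum (Gammaset m1 m2) (fun g => Cmul (c g) (chi m1 m2 g i)).
Proof.
  intro H. destruct i as [i1 i2]. apply inI_spec in H as [[Hi1 _] _].
  unfold Pfun. apply Csum_ext. intros g _. rewrite Xfun_node; auto.
Qed.

Lemma coef_unique m1 m2 (Hm1 : (0 < m1)%nat) (Hm2 : (0 < m2)%nat) c f :
  interpolates m1 m2 c f -> forall g, In g (Gammaset m1 m2) -> c g = coef m1 m2 f g.
Proof.
  intros Hint g Hg. pose proof (In_Gammaset _ _ _ Hg) as HgG.
  unfold coef. rewrite normsq_chi by auto.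
  unfold inner_w.
  rewrite (Csum_ext _ _ (fun i => Csum (Gammaset m1 m2) (fun g' =>
             Cmul (c g') (Cmul (RtoC (weight m1 m2 i)) (Cmul (chi m1 m2 g' i) (Cconj (chi m1 m2 g i))))))).
  2:{ intros i Hi. rewrite <- (Hint i Hi). rewrite Pfun_node by (auto; now apply In_Iset).
      rewrite Csum_mul_r, Csum_mul_l. apply Csum_ext. intros g' _. apply cx_id1. }
  rewrite Csum_exchange.
  rewrite (Csum_ext _ _ (fun g' => if andb (fst g' =? fst g)%Z (snd g' =? snd g)%Z
                                   then Cmul (c g') (RtoC (Nval m1 (fst g'))) else C0)).
  2:{ intros g' Hg'. rewrite <- Csum_mul_l. fold (inner_w m1 m2 (chi m1 m2 g') (chi m1 m2 g)).
      rewrite inner_chi by (auto; now apply In_Gammaset).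
      destruct andb; auto. unfold Cmul, C0; destruct (c g'); simpl; f_equal; ring. }
  destruct g as [g1 g2]. unfold Gammaset in *. rewrite Csum_fp_delta by auto.
  pose proof (Nval_pos m1 g1). unfold Cmul, CdivR, RtoC. apply Cx_eq; simpl; field; lra.
Qed.

Lemma weight_pos m1 m2 i : (0 < m1)%nat -> (0 < m2)%nat -> 0 < weight m1 m2 i.
Proof.
  intros. assert (0 < INR m1) by (apply lt_0_INR; lia).
  assert (0 < INR m2) by (apply lt_0_INR; lia).
  unfold weight. destruct (fst i =? 0)%Z; apply Rdiv_lt_0_compat; try lra;
  repeat apply Rmult_lt_0_compat; lra.
Qed.

Lemma kernel m1 m2 (Hm1 : (0 < m1)%nat) (Hm2 : (0 < m2)%nat) i j :
  inI m1 m2 i = true -> inI m1 m2 j = true ->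
  Csum (Gammaset m1 m2) (fun g => CdivR (Cmul (Cconj (chi m1 m2 g j)) (chi m1 m2 g i)) (Nval m1 (fst g))) =
  (if andb (fst i =? fst j)%Z (snd i =? snd j)%Z then / weight m1 m2 i else 0, 0).
Proof.
  destruct i as [i1 i2], j as [j1 j2]. intros Hi Hj.
  assert (Hm2R : 0 < INR m2) by (apply lt_0_INR; lia).
  rewrite Csum_split. apply Cx_eq; cbn [fst snd].
  - rewrite (Rsum_ext _ _ (fun g =>
     cos (IZR (fst g) * IZR i1 * PI / (2 * INR m1)) *
     cos (IZR (fst g) * IZR j1 * PI / (2 * INR m1)) *
     cos (IZR (snd g) * (IZR (i2 - j2) * PI / (2 * INR m2)) + 0) / Nval m1 (fst g))).
    + rewrite dual_sum by auto. rewrite cos_0. destruct andb; [field|reflexivity].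
      apply Rgt_not_eq, weight_pos; auto.
    + intros [g1 g2] _. unfold chi, Cmul, Cconj, RtoC, Cexpi, CdivR. cbn [fst snd].
      rewrite Rplus_0_r.
      replace (IZR g2 * (IZR (i2 - j2) * PI / (2 * INR m2))) with
        (IZR g2 * IZR i2 * PI / (2 * INR m2) - IZR g2 * IZR j2 * PI / (2 * INR m2))
        by (rewrite minus_IZR; field; lra).
      rewrite cos_minus. field. apply Rgt_not_eq, Nval_pos.
  - rewrite (Rsum_ext _ _ (fun g =>
     cos (IZR (fst g) * IZR i1 * PI / (2 * INR m1)) *
     cos (IZR (fst g) * IZR j1 * PI / (2 * INR m1)) *
     cos (IZR (snd g) * (IZR (i2 - j2) * PI / (2 * INR m2)) + - (PI / 2)) / Nval m1 (fst g))).
    + rewrite dual_sum by auto. rewrite cos_neg, cos_PI2. destruct andb; [field|reflexivity].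
      apply Rgt_not_eq, weight_pos; auto.
    + intros [g1 g2] _. unfold chi, Cmul, Cconj, RtoC, Cexpi, CdivR. cbn [fst snd].
      rewrite cos_plus, cos_neg, sin_neg, cos_PI2, sin_PI2.
      replace (IZR g2 * (IZR (i2 - j2) * PI / (2 * INR m2))) with
        (IZR g2 * IZR i2 * PI / (2 * INR m2) - IZR g2 * IZR j2 * PI / (2 * INR m2))
        by (rewrite minus_IZR; field; lra).
      rewrite sin_minus. field. apply Rgt_not_eq, Nval_pos.
Qed.

Lemma coef_interpolates m1 m2 (Hm1 : (0 < m1)%nat) (Hm2 : (0 < m2)%nat) f :
  interpolates m1 m2 (coef m1 m2 f) f.
Proof.
  intros i Hi. pose proof (In_Iset _ _ _ Hi) as HiI.
  rewrite Pfun_node by auto.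
  rewrite (Csum_ext _ _ (fun g => Csum (Iset m1 m2) (fun j =>
      Cmul (f j) (Cmul (RtoC (weight m1 m2 j))
        (CdivR (Cmul (Cconj (chi m1 m2 g j)) (chi m1 m2 g i)) (Nval m1 (fst g))))))).
  2:{ intros g Hg. unfold coef. rewrite normsq_chi by (auto; now apply In_Gammaset).
      unfold inner_w. rewrite CdivR_Csum, Csum_mul_r. apply Csum_ext. intros j _. apply cx_id2. }
  rewrite Csum_exchange.
  rewrite (Csum_ext _ _ (fun j => if andb (fst j =? fst i)%Z (snd j =? snd i)%Z then f j else C0)).
  2:{ intros j Hj. rewrite <- Csum_mul_l, <- Csum_mul_l.
      rewrite kernel by (auto; now apply In_Iset).
      destruct i as [i1 i2], j as [j1 j2]; cbn [fst snd].
      rewrite (Z.eqb_sym j1 i1), (Z.eqb_sym j2 i2).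
      destruct (Z.eqb_spec i1 j1); destruct (Z.eqb_spec i2 j2); subst; cbn [andb];
      pose proof (weight_pos m1 m2 (j1, j2) Hm1 Hm2);
      destruct (f (_, _)); unfold Cmul, RtoC, C0; simpl; f_equal; try field; try ring; lra. }
  destruct i as [i1 i2]. unfold Iset in *. rewrite Csum_fp_delta by auto. reflexivity.
Qed.

Module IntPart.
Import Coquelicot.Coquelicot.

Fixpoint Cheb (n : nat) (r : R) : R :=
  match n with 0 => 1 | S p => match p with 0 => r | S q => 2 * r * Cheb p r - Cheb q r end end.

Lemma Cheb_ind2 (P : nat -> Prop) : P 0%nat -> P 1%nat -> (forall n, P n -> P (S n) -> P (S (S n))) -> forall n, P n.
Proof. intros H0 H1 HS n. assert (P n /\ P (S n)) as [? ?]; auto. induction n; auto. destruct IHn; auto. Qed.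

Lemma Cheb_cont n x : continuous (Cheb n) x.
Proof.
  revert x. induction n using Cheb_ind2; intro x.
  - apply continuous_const.
  - apply continuous_id.
  - apply continuity_pt_filterlim.
    apply (continuity_pt_minus (fun r => 2 * r * Cheb (S n) r) (Cheb n)).
    + apply (continuity_pt_mult (fun r => 2 * r) (Cheb (S n))).
      * apply (continuity_pt_mult (fun _ => 2) (fun r => r)). apply continuity_pt_const. intros a b; auto. apply derivable_continuous_pt, derivable_pt_id.
      * apply continuity_pt_filterlim, IHn0.
    + apply continuity_pt_filterlim, IHn.
Qed.

Lemma Cheb_cos n x : Cheb n (cos x) = cos (INR n * x).
Proof.
  induction n using Cheb_ind2.
  - simpl. rewrite Rmult_0_l, cos_0. reflexivity.
  - simpl. f_equal; ring.
  - change (Cheb (S (S n)) (cos x)) with (2 * cos x * Cheb (S n) (cos x) - Cheb n (cos x)).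
    rewrite IHn, IHn0. rewrite !S_INR.
    replace ((INR n + 1 + 1) * x) with ((INR n + 1) * x + x) by ring.
    replace (INR n * x) with ((INR n + 1) * x - x) by ring.
    rewrite cos_plus, cos_minus. ring.
Qed.

Lemma Tcheb_Cheb z r : -1 <= r <= 1 -> Tcheb z r = Cheb (Z.abs_nat z) r.
Proof.
  intro H. unfold Tcheb. rewrite <- (cos_acos r) at 2 by auto. rewrite Cheb_cos.
  rewrite INR_IZR_INZ, Nat2Z.inj_abs_nat.
  destruct (Z_le_gt_dec 0 z).
  - rewrite Z.abs_eq by lia. reflexivity.
  - rewrite Z.abs_neq by lia. rewrite opp_IZR, Ropp_mult_distr_l_reverse, cos_neg. reflexivity.
Qed.

Lemma ex_RInt_Cheb n : ex_RInt (fun r => Cheb n r * r) 0 1.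
Proof.
  apply (ex_RInt_continuous (V := R_CompleteNormedModule)). intros z _.
  apply (continuous_mult (Cheb n) (fun r => r)); [apply Cheb_cont|apply continuous_id].
Qed.

Definition J (z : Z) : R := RInt (fun r => Cheb (Z.abs_nat z) r * r) 0 1.

Lemma RInt_Cheb_sub n : RInt (fun r => Cheb n r * r) 0 1 =
  RInt (fun y => - sin y * (cos (INR n * y) * cos y)) (PI / 2) 0.
Proof.
  rewrite <- cos_PI2 at 1. rewrite <- cos_0 at 1.
  rewrite <- (RInt_comp (fun r => Cheb n r * r) cos (fun y => - sin y)).
  - apply RInt_ext. intros x _. rewrite Cheb_cos. reflexivity.
  - intros x _. apply (continuous_mult (Cheb n) (fun r => r)); [apply Cheb_cont|apply continuous_id].
  - intros x _. split.
    + auto_derive; auto. ring.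
    + apply (ex_derive_continuous (K := R_AbsRing) (V := R_NormedModule)). auto_derive. auto.
Qed.

Definition Gs (m y : R) : R := if Req_EM_T m 0 then 0 else - cos (m * y) / m.

Lemma Gs_deriv m y : is_derive (Gs m) y (sin (m * y)).
Proof.
  unfold Gs. destruct (Req_EM_T m 0) as [E|E].
  - subst. rewrite Rmult_0_l, sin_0. auto_derive; auto.
  - auto_derive; auto. field. auto.
Qed.

Lemma Gs_diff4 z : Gs (4 * IZR z) 0 - Gs (4 * IZR z) (PI / 2) = 0.
Proof.
  unfold Gs. destruct (Req_EM_T (4 * IZR z) 0); [ring|].
  replace (4 * IZR z * (PI / 2)) with (IZR (2 * z) * PI) by (rewrite mult_IZR; field).
  rewrite cos_Zpi. replace (Z.even (2 * z)) with true by (symmetry; apply Z.even_spec; exists z; auto).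
  rewrite Rmult_0_r, cos_0. ring.
Qed.

Lemma Gs_diff2 z : Gs (2 + 4 * IZR z) 0 - Gs (2 + 4 * IZR z) (PI / 2) = - 2 / (2 + 4 * IZR z).
Proof.
  assert (H : 2 + 4 * IZR z <> 0).
  { intro E. replace (2 + 4 * IZR z) with (IZR (2 + 4 * z)) in E by (rewrite plus_IZR, mult_IZR; reflexivity).
    apply eq_IZR in E. lia. }
  unfold Gs. destruct (Req_EM_T (2 + 4 * IZR z) 0); [contradiction|].
  replace ((2 + 4 * IZR z) * (PI / 2)) with (IZR (2 * z + 1) * PI) by (rewrite plus_IZR, mult_IZR; field).
  rewrite cos_Zpi, Z.even_odd. rewrite Rmult_0_r, cos_0. field. auto.
Qed.

Lemma is_RInt_half (j : R) :
  is_RInt (fun y => - sin y * (cos (2 * j * y) * cos y)) (PI / 2) 0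
    (- / 4 * ((Gs (2 + 2 * j) 0 - Gs (2 + 2 * j) (PI / 2)) + (Gs (2 - 2 * j) 0 - Gs (2 - 2 * j) (PI / 2)))).
Proof.
  set (F := fun y => - / 4 * (Gs (2 + 2 * j) y + Gs (2 - 2 * j) y)).
  replace (- / 4 * ((Gs (2 + 2 * j) 0 - Gs (2 + 2 * j) (PI / 2)) + (Gs (2 - 2 * j) 0 - Gs (2 - 2 * j) (PI / 2))))
    with (minus (F 0) (F (PI / 2))) by (unfold F, minus, plus, opp; simpl; ring).
  apply (is_RInt_derive (V := R_CompleteNormedModule)).
  - intros y _. unfold F.
    apply is_derive_ext with (f := fun y => - / 4 * (Gs (2 + 2 * j) y + Gs (2 - 2 * j) y)); [reflexivity|].
    replace (- sin y * (cos (2 * j * y) * cos y)) with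
      (- / 4 * (sin ((2 + 2 * j) * y) + sin ((2 - 2 * j) * y))).
    + apply (is_derive_scal (fun y => Gs (2 + 2 * j) y + Gs (2 - 2 * j) y) y (- / 4)).
      apply (is_derive_plus (Gs (2 + 2 * j)) (Gs (2 - 2 * j))); apply Gs_deriv.
    + replace ((2 + 2 * j) * y) with (2 * y + 2 * j * y) by ring.
      replace ((2 - 2 * j) * y) with (2 * y - 2 * j * y) by ring.
      rewrite sin_plus, sin_minus, sin_2a. field.
  - intros y _. apply (ex_derive_continuous (K := R_AbsRing) (V := R_NormedModule)). auto_derive. auto.
Qed.

Lemma J_4k k : J (4 * Z.of_nat k) = / (2 * (1 - 4 * INR k ^ 2)).
Proof.
  unfold J. replace (Z.abs_nat (4 * Z.of_nat k)) with (4 * k)%nat by lia.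
  rewrite RInt_Cheb_sub.
  rewrite (RInt_ext _ (fun y => - sin y * (cos (2 * (2 * INR k) * y) * cos y))).
  2:{ intros x _. rewrite mult_INR. simpl (INR 4). f_equal. f_equal. f_equal. ring. }
  rewrite (is_RInt_unique _ _ _ _ (is_RInt_half (2 * INR k))).
  replace (2 + 2 * (2 * INR k)) with (2 + 4 * IZR (Z.of_nat k)) by (rewrite <- INR_IZR_INZ; ring).
  replace (2 - 2 * (2 * INR k)) with (2 + 4 * IZR (- Z.of_nat k)) by (rewrite opp_IZR, <- INR_IZR_INZ; ring).
  rewrite !Gs_diff2. rewrite opp_IZR, <- INR_IZR_INZ.
  assert (0 <= INR k) by apply pos_INR.
  assert (Hk : INR k = 0 \/ 1 <= INR k).
  { destruct k; [left; reflexivity| right; rewrite S_INR; pose proof (pos_INR k); lra]. }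
  assert (H1 : 2 - 4 * INR k <> 0) by (destruct Hk; nra).
  assert (H2 : 1 - 4 * INR k ^ 2 <> 0) by (destruct Hk; nra).
  replace (2 + 4 * - INR k) with (2 - 4 * INR k) by ring. field. lra.
Qed.

Lemma J_4k2 k : J (4 * Z.of_nat k + 2) = 0.
Proof.
  unfold J. replace (Z.abs_nat (4 * Z.of_nat k + 2)) with (4 * k + 2)%nat by lia.
  rewrite RInt_Cheb_sub.
  rewrite (RInt_ext _ (fun y => - sin y * (cos (2 * (2 * INR k + 1) * y) * cos y))).
  2:{ intros x _. rewrite plus_INR, mult_INR. simpl (INR 4). simpl (INR 2). f_equal. f_equal. f_equal. ring. }
  rewrite (is_RInt_unique _ _ _ _ (is_RInt_half (2 * INR k + 1))).
  replace (2 + 2 * (2 * INR k + 1)) with (4 * IZR (Z.of_nat k + 1)) by (rewrite plus_IZR, <- INR_IZR_INZ; ring).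
  replace (2 - 2 * (2 * INR k + 1)) with (4 * IZR (- Z.of_nat k)) by (rewrite opp_IZR, <- INR_IZR_INZ; ring).
  rewrite !Gs_diff4. ring.
Qed.

Lemma is_RInt_val (f : R -> R) a b v w : is_RInt f a b v -> v = w -> is_RInt f a b w.
Proof. intros H ->. exact H. Qed.

Lemma int_cos (m : Z) : is_RInt (fun t => cos (IZR m * t)) 0 (2 * PI) (if (m =? 0)%Z then 2 * PI else 0).
Proof.
  destruct (Z.eqb_spec m 0) as [E|E].
  - subst. apply is_RInt_ext with (f := fun _ => 1).
    { intros. rewrite Rmult_0_l, cos_0. reflexivity. }
    apply (is_RInt_val _ _ _ _ _ (is_RInt_const (V := R_NormedModule) 0 (2 * PI) 1)).
    unfold scal; simpl. unfold mult; simpl. ring.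
  - assert (HR : IZR m <> 0) by (intro H; apply eq_IZR in H; lia).
    apply (is_RInt_val _ _ _ (minus (sin (IZR m * (2 * PI)) / IZR m) (sin (IZR m * 0) / IZR m))).
    + apply (is_RInt_derive (V := R_CompleteNormedModule) (fun t => sin (IZR m * t) / IZR m)).
      * intros t _. auto_derive; auto. field. auto.
      * intros t _. apply (ex_derive_continuous (K := R_AbsRing) (V := R_NormedModule)). auto_derive. auto.
    + unfold minus, plus, opp; simpl. rewrite Rmult_0_r, sin_0.
      replace (IZR m * (2 * PI)) with (0 + 2 * IZR m * PI) by ring. rewrite sin_Zper, sin_0. field. auto.
Qed.

Lemma int_sin (m : Z) : is_RInt (fun t => sin (IZR m * t)) 0 (2 * PI) 0.
Proof.
  destruct (Z.eqb_spec m 0) as [E|E].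
  - subst. apply is_RInt_ext with (f := fun _ => 0).
    { intros. rewrite Rmult_0_l, sin_0. reflexivity. }
    apply (is_RInt_val _ _ _ _ _ (is_RInt_const (V := R_NormedModule) 0 (2 * PI) 0)).
    unfold scal; simpl. unfold mult; simpl. ring.
  - assert (HR : IZR m <> 0) by (intro H; apply eq_IZR in H; lia).
    apply (is_RInt_val _ _ _ (minus (- cos (IZR m * (2 * PI)) / IZR m) (- cos (IZR m * 0) / IZR m))).
    + apply (is_RInt_derive (V := R_CompleteNormedModule) (fun t => - cos (IZR m * t) / IZR m)).
      * intros t _. auto_derive; auto. field. auto.
      * intros t _. apply (ex_derive_continuous (K := R_AbsRing) (V := R_NormedModule)). auto_derive. auto.
    + unfold minus, plus, opp; simpl. rewrite Rmult_0_r, cos_0.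
      replace (IZR m * (2 * PI)) with (0 + 2 * IZR m * PI) by ring. rewrite cos_Zper, cos_0. field. auto.
Qed.

Lemma is_RInt_Rsum {A} (l : list A) (F : A -> R -> R) (V : A -> R) a b :
  (forall x, In x l -> is_RInt (F x) a b (V x)) ->
  is_RInt (fun t => Rsum l (fun x => F x t)) a b (Rsum l V).
Proof.
  induction l as [|x l IH]; intro H; simpl.
  - apply (is_RInt_val _ _ _ _ _ (is_RInt_const (V := R_NormedModule) a b 0)).
    unfold scal; simpl. unfold mult; simpl. ring.
  - apply (is_RInt_plus (V := R_NormedModule) (F x) (fun t => Rsum l (fun x => F x t)));
      [apply H; left; reflexivity | apply IH; intros; apply H; right; auto].
Qed.

Lemma has_of_is f a b v : is_RInt f a b v -> has_RInt f a b v.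
Proof.
  intro H. assert (ex : ex_RInt f a b) by (exists v; auto).
  exists (ex_RInt_Reals_0 _ _ _ ex). rewrite <- RInt_Reals. apply is_RInt_unique; auto.
Qed.

Lemma Rsum_mult_r {A} (l : list A) F c : Rsum l F * c = Rsum l (fun x => F x * c).
Proof. induction l; simpl; [ring|rewrite <- IHl; ring]. Qed.

Lemma iter_gen m1 m2 (a b : Z * Z -> R) (F : R -> R -> R) :
  (forall r t, F r t = Rsum (Gammaset m1 m2) (fun g =>
       (a g * cos (IZR (snd g) * t) + b g * sin (IZR (snd g) * t)) * Tcheb (fst g) r) * r) ->
  has_iter_int F (Rsum (Gammaset m1 m2) (fun g => a g * J (fst g) * (if (snd g =? 0)%Z then 2 * PI else 0))).
Proof.
  intro HF.
  exists (fun t => Rsum (Gammaset m1 m2) (fun g =>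
       (a g * cos (IZR (snd g) * t) + b g * sin (IZR (snd g) * t)) * J (fst g))).
  split.
  - intros t _. apply has_of_is.
    apply is_RInt_ext with (f := fun r => Rsum (Gammaset m1 m2) (fun g =>
       (a g * cos (IZR (snd g) * t) + b g * sin (IZR (snd g) * t)) * (Cheb (Z.abs_nat (fst g)) r * r))).
    + intros r Hr. rewrite HF, Rsum_mult_r. apply Rsum_ext. intros g _.
      assert (0 < r < 1).
      { unfold Rmin, Rmax in Hr. destruct (Rle_dec 0 1); lra. }
      rewrite Tcheb_Cheb by lra. ring.
    + apply is_RInt_Rsum. intros g _.
      apply (is_RInt_scal (V := R_NormedModule) (fun r => Cheb (Z.abs_nat (fst g)) r * r)).
      unfold J. apply (RInt_correct (V := R_CompleteNormedModule)). apply ex_RInt_Cheb.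
  - apply has_of_is. apply is_RInt_Rsum. intros g _.
    apply is_RInt_ext with (f := fun t => plus (scal (a g * J (fst g)) (cos (IZR (snd g) * t)))
                                             (scal (b g * J (fst g)) (sin (IZR (snd g) * t)))).
    { intros. unfold plus, scal; simpl. unfold mult; simpl. ring. }
    apply (is_RInt_val _ _ _ _ _ (is_RInt_plus (V := R_NormedModule) _ _ _ _ _ _
             (is_RInt_scal _ _ _ (a g * J (fst g)) _ (int_cos (snd g)))
             (is_RInt_scal _ _ _ (b g * J (fst g)) _ (int_sin (snd g))))).
    unfold plus, scal; simpl. unfold mult; simpl. ring.
Qed.
End IntPart.

Lemma Cre_Pfun m1 m2 c r t : Cre (Pfun m1 m2 c r t) * r =
  Rsum (Gammaset m1 m2) (fun g => (fst (c g) * cos (IZR (snd g) * t) + (- snd (c g)) * sin (IZR (snd g) * t))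
                                  * Tcheb (fst g) r) * r.
Proof.
  unfold Pfun, Cre. rewrite Csum_split. cbn [fst]. f_equal. apply Rsum_ext. intros g _.
  unfold Cmul, Xfun, RtoC, Cexpi. destruct (c g). simpl. ring.
Qed.

Lemma Cim_Pfun m1 m2 c r t : Cim (Pfun m1 m2 c r t) * r =
  Rsum (Gammaset m1 m2) (fun g => (snd (c g) * cos (IZR (snd g) * t) + fst (c g) * sin (IZR (snd g) * t))
                                  * Tcheb (fst g) r) * r.
Proof.
  unfold Pfun, Cim. rewrite Csum_split. cbn [snd]. f_equal. apply Rsum_ext. intros g _.
  unfold Cmul, Xfun, RtoC, Cexpi. destruct (c g). simpl. ring.
Qed.

Lemma Rsum_single {A} (x : A) F : Rsum (x :: nil) F = F x.
Proof. unfold Rsum; simpl; ring. Qed.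

Lemma fold_even (h : Z -> R) :
  (forall z, Z.even z = false -> h z = 0) -> (forall q, (0 <= q)%Z -> h (4 * q + 2)%Z = 0) ->
  forall m, Rsum (Zrange 0 (S (2 * m))) h = Rsum (seq 0 (S (Nat.div m 2))) (fun k => h (4 * Z.of_nat k)%Z).
Proof.
  intros Hodd H2. induction m.
  - reflexivity.
  - replace (S (2 * S m)) with (S (2 * m) + 2)%nat by lia.
    rewrite Zrange_app, Rsum_app, IHm.
    assert (Etail : Rsum (Zrange (0 + Z.of_nat (S (2 * m))) 2) h = h (2 * Z.of_nat m + 2)%Z).
    { rewrite !Zrange_S. replace (Zrange _ 0) with (@nil Z) by reflexivity.
      unfold Rsum; cbn [fold_right].
      rewrite (Hodd (0 + Z.of_nat (S (2 * m)))%Z).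
      2:{ replace (0 + Z.of_nat (S (2 * m)))%Z with (2 * Z.of_nat m + 1)%Z by lia. apply Z.even_odd. }
      replace (0 + Z.of_nat (S (2 * m)) + 1)%Z with (2 * Z.of_nat m + 2)%Z by lia. ring. }
    rewrite Etail.
    destruct (Nat.Even_or_Odd m) as [[q Hq]|[q Hq]].
    + replace (Nat.div (S m) 2) with (Nat.div m 2).
      2:{ subst. rewrite <- (Nat.div_unique (2 * q) 2 q 0), <- (Nat.div_unique (S (2 * q)) 2 q 1); lia. }
      replace (2 * Z.of_nat m + 2)%Z with (4 * Z.of_nat q + 2)%Z by lia.
      rewrite H2 by lia. ring.
    + replace (Nat.div (S m) 2) with (S (Nat.div m 2)).
      2:{ subst. rewrite <- (Nat.div_unique (2 * q + 1) 2 q 1), <- (Nat.div_unique (S (2 * q + 1)) 2 (S q) 0); lia. }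
      rewrite (seq_S (S (Nat.div m 2)) 0), Rsum_app, Rsum_single.
      replace (4 * Z.of_nat (0 + S (Nat.div m 2)))%Z with (2 * Z.of_nat m + 2)%Z.
      * ring.
      * subst. rewrite <- (Nat.div_unique (2 * q + 1) 2 q 1); lia.
Qed.

Lemma one_minus_4k2 k : 1 - 4 * INR k ^ 2 <> 0.
Proof.
  assert (Hk : INR k = 0 \/ 1 <= INR k).
  { destruct k; [left; reflexivity| right; rewrite S_INR; pose proof (pos_INR k); lra]. }
  destruct Hk; nra.
Qed.

Lemma cub_sum m1 m2 (Hm1 : (0 < m1)%nat) (Hm2 : (0 < m2)%nat) (a : Z * Z -> R) :
  Rsum (Gammaset m1 m2) (fun g => a g * IntPart.J (fst g) * (if (snd g =? 0)%Z then 2 * PI else 0)) / PI =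
  Rsum (seq 0 (S (Nat.div m1 2))) (fun k => a (4 * Z.of_nat k, 0)%Z / (1 - 4 * INR k ^ 2)).
Proof.
  pose proof PI_RGT_0.
  rewrite Rsum_Gammaset.
  rewrite (Rsum_ext _ _ (fun g1 => if Z.even g1 then a (g1, 0%Z) * IntPart.J g1 * (2 * PI) else 0)).
  2:{ intros g1 Hg1. apply In_Zrange in Hg1.
      rewrite (Rsum_ext _ _ (fun g2 => if (g2 =? 0)%Z then (if Z.even g1 then a (g1, 0%Z) * IntPart.J g1 * (2 * PI) else 0) else 0)).
      - rewrite Rsum_delta. replace (andb (- Z.of_nat m2 + 1 <=? 0)%Z (0 <? - Z.of_nat m2 + 1 + Z.of_nat (2 * m2))%Z) with true; auto.
        symmetry. apply andb_true_iff. split; [apply Z.leb_le|apply Z.ltb_lt]; lia.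
      - intros g2 Hg2. apply In_Zrange in Hg2. cbn [fst snd].
        destruct (Z.eqb_spec g2 0).
        + subst. destruct (inGamma m1 m2 (g1, 0%Z)) eqn:E.
          * apply inGamma_spec in E. rewrite Z.add_0_r in E. destruct E as [_ ->]. reflexivity.
          * destruct (Z.even g1) eqn:E2; auto. exfalso.
            assert (inGamma m1 m2 (g1, 0%Z) = true); [|congruence].
            apply inGamma_spec. rewrite Z.add_0_r. split; auto. rewrite Nat2Z.inj_succ, Nat2Z.inj_mul in Hg1. lia.
        + destruct inGamma; ring. }
  rewrite fold_even.
  - unfold Rdiv. rewrite IntPart.Rsum_mult_r. apply Rsum_ext. intros k _.
    replace (Z.even (4 * Z.of_nat k)) with true by (symmetry; apply Z.even_spec; exists (2 * Z.of_nat k)%Z; lia).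
    rewrite IntPart.J_4k. pose proof (one_minus_4k2 k). field. split; lra.
  - intros z Hz. rewrite Hz. reflexivity.
  - intros q Hq. replace (Z.even (4 * q + 2)) with true.
    + replace q with (Z.of_nat (Z.to_nat q)) by lia. rewrite IntPart.J_4k2. ring.
    + symmetry. apply Z.even_spec. exists (2 * q + 1)%Z. lia.
Qed.

Lemma disk_mean_c m1 m2 (Hm1 : (0 < m1)%nat) (Hm2 : (0 < m2)%nat) c :
  disk_mean (Pfun m1 m2 c) (cubature m1 c).
Proof.
  exists (Rsum (Gammaset m1 m2) (fun g => fst (c g) * IntPart.J (fst g) * (if (snd g =? 0)%Z then 2 * PI else 0))),
         (Rsum (Gammaset m1 m2) (fun g => snd (c g) * IntPart.J (fst g) * (if (snd g =? 0)%Z then 2 * PI else 0))).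
  split; [|split; [|split]].
  - apply (IntPart.iter_gen m1 m2 (fun g => fst (c g)) (fun g => - snd (c g))). intros; apply Cre_Pfun.
  - apply (IntPart.iter_gen m1 m2 (fun g => snd (c g)) (fun g => fst (c g))). intros; apply Cim_Pfun.
  - rewrite cub_sum by auto. unfold cubature, Cre. rewrite Csum_split. reflexivity.
  - rewrite cub_sum by auto. unfold cubature, Cim. rewrite Csum_split. reflexivity.
Qed.

Theorem mainTheorem14 (m1 m2 : nat) (Hm1 : (0 < m1)%nat) (Hm2 : (0 < m2)%nat)
  (f : Z * Z -> Cx) :
  (exists c : Z * Z -> Cx, interpolates m1 m2 c f) /\
  (forall c : Z * Z -> Cx, interpolates m1 m2 c f ->
     (forall g, In g (Gammaset m1 m2) -> c g = coef m1 m2 f g) /\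
     disk_mean (Pfun m1 m2 c) (cubature m1 c)) /\
  (forall d : Z * Z -> Cx,
     let fP := fun i : Z * Z =>
       Pfun m1 m2 d (r_node m1 (fst i)) (theta_node m2 (snd i)) in
     disk_mean (Pfun m1 m2 d) (cubature m1 (coef m1 m2 fP))).
Proof.
  split; [|split].
  - exists (coef m1 m2 f). apply coef_interpolates; auto.
  - intros c Hc. split.
    + apply coef_unique; auto.
    + apply disk_mean_c; auto.
  - intros d fP.
    assert (Hint : interpolates m1 m2 d fP) by (intros i _; reflexivity).
    replace (cubature m1 (coef m1 m2 fP)) with (cubature m1 d).
    + apply disk_mean_c; auto.
    + unfold cubature. apply Csum_ext. intros k Hk. apply in_seq in Hk.
      rewrite (coef_unique m1 m2 Hm1 Hm2 d fP Hint); auto.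
      unfold Gammaset. apply filter_In. split.
      * apply In_pairs. split; apply In_Zrange.
        -- assert (2 * Nat.div m1 2 <= m1)%nat by (apply Nat.mul_div_le; lia). lia.
        -- lia.
      * apply inGamma_spec. split.
        -- assert (2 * Nat.div m1 2 <= m1)%nat by (apply Nat.mul_div_le; lia). lia.
        -- rewrite Z.add_0_r. apply Z.even_spec. exists (2 * Z.of_nat k)%Z. lia.
Qed.
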